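(* Let $t,x\in\mathbb{C}$ with $x\ne t$, $t\notin\{0,1\}$ and $x\notin\{0,1\}$. For $s\in\mathbb{C}\setminus\{0,1,x\}$ let $$g(s)=\begin{pmatrix}-(s-1)x & ts(s-1)\\ -(s-x) & s(s-x)\end{pmatrix}\in\mathrm{PGL}_2(\mathbb{C}).$$ Then the elements $g(s)$, $s\in\mathbb{C}\setminus\{0,1,x\}$, generate a dense subgroup of $\mathrm{PGL}_2(\mathbb{C})$. *)

(* Defs.v *)
From mathcomp Require Import all_boot all_algebra.
From mathcomp Require Import reals complex.
Set Implicit Arguments. Unset Strict Implicit. Unset Printing Implicit Defensive.
Import GRing.Theory Num.Theory.
Local Open Scope ring_scope.

Definition mx2 (K : Type) (a b c d : K) : 'M[K]_2 :=
  \matrix_(i < 2, j < 2)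
    if i == 0 :> nat then (if j == 0 :> nat then a else b)
    else (if j == 0 :> nat then c else d).

Definition gmat (R : realType) (t x s : R[i]) : 'M[R[i]]_2 :=
  mx2 (- ((s - 1) * x)) (t * s * (s - 1)) (- (s - x)) (s * (s - x)).

Definition gens (R : realType) (t x : R[i]) (M : 'M[R[i]]_2) : Prop :=
  exists s : R[i], [/\ s != 0, s != 1, s != x & M = gmat t x s].

Inductive gen_by (K : fieldType) (S : 'M[K]_2 -> Prop) : 'M[K]_2 -> Prop :=
| gen_one : gen_by S 1%:M
| gen_mul g w : S g -> gen_by S w -> gen_by S (g *m w)
| gen_inv g w : S g -> gen_by S w -> gen_by S (invmx g *m w).

(* A subgroup H of PGL_2(C) = GL_2(C)/C^* is dense (quotient topology) iff
   its preimage {c * w | c in C^*, w a representative} is dense in GL_2(C)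
   (the projection is open and surjective).  Density in GL_2(C), with the
   topology induced from C^4, is expressed with entrywise balls. *)
Definition PGL2_dense (R : realType) (G : 'M[R[i]]_2 -> Prop) : Prop :=
  forall (A : 'M[R[i]]_2), A \in unitmx ->
  forall eps : R, 0 < eps ->
  exists (c : R[i]) (w : 'M[R[i]]_2),
    [/\ c != 0, G w & forall i j : 'I_2, `|c * w i j - A i j| < (eps%:C)%C].

(* Main.v *)
Require Import Defs.
From mathcomp Require Import all_boot all_algebra.
From mathcomp Require Import reals complex.
From mathcomp Require Import ring.
From mathcomp Require Import order.
Import Order.TTheory GRing.Theory Num.Theory.
Local Open Scope ring_scope.
Set Implicit Arguments. Unset Strict Implicit.

Section Infra.
Variable K : fieldType.

Lemma mx2E (a b c d : K) i j : mx2 a b c d i j =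
  if i == 0 :> nat then (if j == 0 :> nat then a else b)
  else (if j == 0 :> nat then c else d).
Proof. by rewrite mxE. Qed.

Lemma mx2_mul (a b c d a' b' c' d' : K) :
  mx2 a b c d *m mx2 a' b' c' d' =
  mx2 (a*a'+b*c') (a*b'+b*d') (c*a'+d*c') (c*b'+d*d').
Proof.
apply/matrixP => i j; rewrite !mxE !big_ord_recr big_ord0 /= add0r !mxE.
by case: i => [[|[|//]] ?]; case: j => [[|[|//]] ?].
Qed.

Lemma mx2_scale (s a b c d : K) : s *: mx2 a b c d = mx2 (s*a) (s*b) (s*c) (s*d).
Proof.
by apply/matrixP => i j; rewrite !mxE; case: i => [[|[|//]] ?]; case: j => [[|[|//]] ?].
Qed.

Lemma mx2_1 : mx2 1 0 0 1 = 1%:M :> 'M[K]_2.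
Proof.
by apply/matrixP => i j; rewrite !mxE; case: i => [[|[|//]] ?]; case: j => [[|[|//]] ?].
Qed.

Lemma mx2_det (a b c d : K) : \det (mx2 a b c d) = a * d - b * c.
Proof.
rewrite (expand_det_row _ ord0) !big_ord_recr big_ord0 /= add0r.
rewrite /cofactor !det_mx11 !mxE /=.
by rewrite add0n expr0 expr1 mul1r mulN1r mulrN.
Qed.

Lemma mx2_congr (a b c d a' b' c' d' : K) :
  a = a' -> b = b' -> c = c' -> d = d' -> mx2 a b c d = mx2 a' b' c' d'.
Proof. by move=> -> -> -> ->. Qed.

Lemma gen_by_mul (S : 'M[K]_2 -> Prop) w1 w2 :
  gen_by S w1 -> gen_by S w2 -> gen_by S (w1 *m w2).
Proof.
elim=> [|g w Sg _ IH|g w Sg _ IH] h2; first by rewrite mul1mx.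
  by rewrite -mulmxA; apply: gen_mul => //; apply: IH.
by rewrite -mulmxA; apply: gen_inv => //; apply: IH.
Qed.

Definition P (S : 'M[K]_2 -> Prop) (M : 'M[K]_2) :=
  exists c w, [/\ c != 0, gen_by S w & M = c *: w].

Lemma P_mul S M N : P S M -> P S N -> P S (M *m N).
Proof.
move=> [c [w [c0 hw ->]]] [c' [w' [c0' hw' ->]]].
exists (c * c'), (w *m w'); split; first by rewrite mulf_neq0.
  exact: gen_by_mul.
by rewrite -scalemxAl -scalemxAr scalerA.
Qed.

Lemma P_scale S M a : a != 0 -> P S M -> P S (a *: M).
Proof.
move=> a0 [c [w [c0 hw ->]]]; exists (a * c), w; split => //.
  by rewrite mulf_neq0. by rewrite scalerA.
Qed.

Lemma P_gen (S : 'M[K]_2 -> Prop) M : S M -> P S M.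
Proof.
move=> SM; exists 1, M; split; rewrite ?oner_eq0 ?scale1r //.
by rewrite -[M]mulmx1; apply: gen_mul => //; apply: gen_one.
Qed.

Lemma P_scale_inv S M a : a != 0 -> P S (a *: M) -> P S M.
Proof.
move=> a0 h; have h2 : P S (a^-1 *: (a *: M)) by apply: P_scale => //; rewrite invr_neq0.
by move: h2; rewrite scalerA mulVf // scale1r.
Qed.

End Infra.
Section C.
Variable R : realType.
Local Notation C := R[i].

Lemma avoid (l : seq C) : exists p : C, p \notin l.
Proof.
have H : forall b, b \in l -> `|b| <= \sum_(b <- l) `|b|.
  elim: l => // a l IH b; rewrite inE big_cons => /orP [/eqP->|/IH h].
    by rewrite lerDl sumr_ge0.
  by rewrite (le_trans h) // lerDr.
exists (1 + \sum_(b <- l) `|b|); apply/negP => /H.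
have p0 : 0 <= \sum_(b <- l) `|b| by rewrite sumr_ge0.
by rewrite ger0_norm ?addr_ge0 // -[X in _ <= X]add0r lerD2r ler10.
Qed.
Lemma quad_root (b c : C) : exists r : C, r ^+ 2 + b * r + c = 0.
Proof.
have [r hr] := @solve_monicpoly _ 2 (fun i => if i == 0%N then - c else - b) isT.
exists r; move: hr; rewrite !big_ord_recr big_ord0 /= add0r expr0 expr1 mulr1.
by move=> ->; ring.
Qed.

Variables (x q t : C).
Hypotheses (x0 : x != 0) (x1 : x != 1) (q0 : q != 0) (q1 : q != 1)
  (hk0 : q ^+ 2 - q + 1 != 0) (ht1 : x * (q ^+ 2 - q + 1) != q)
  (ht : t = x * ((q ^+ 2 - q + 1) / q)).

Definition k := (q ^+ 2 - q + 1) / q.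
Definition D (a : C) := mx2 a 0 0 1.
Definition E := mx2 1 (- k) 1 (-1).
Definition phi (s : C) := x * (s - 1) / (s - x).
Definition X a b := D a *m E *m D b.
Definition PS := P (gens t x).

Lemma XE a b : X a b = mx2 (a * b) (- (a * k)) b (-1).
Proof.
rewrite /X /D /E !mx2_mul; apply: mx2_congr; ring.
Qed.

Lemma L1 s : s != 0 -> s != 1 -> s != x -> PS (X (phi s) s^-1).
Proof.
move=> s0 s1 sx.
have sx' : s - x != 0 by rewrite subr_eq0.
have e : gmat t x s = (- ((s - x) * s)) *: X (phi s) s^-1.
  rewrite XE mx2_scale /gmat /phi ht /k; apply: mx2_congr; field; 
  by rewrite ?sx' ?s0 ?q0.
apply: (@P_scale_inv _ _ _ (- ((s - x) * s))).
  by rewrite oppr_eq0 mulf_neq0.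
rewrite -e; apply: P_gen; exists s; split => //.
Qed.

Lemma word a1 a2 b2 b3 : a2 != 0 -> b2 != 0 ->
  X a1 (q / a2) *m X a2 b2 *m X (q / b2) b3 =
  ((1 - k) * (k * q - 1)) *: D (a1 * b3 / q).
Proof.
move=> a20 b20; rewrite !XE !mx2_mul /D mx2_scale /k; apply: mx2_congr; field;
  by rewrite ?a20 ?b20 ?q0.
Qed.


Lemma neq_lin (a b s : C) : a != 0 -> s != b / a -> a * s - b != 0.
Proof.
move=> a0 h; rewrite (_ : a * s - b = a * (s - b / a)); last by field.
by rewrite mulf_neq0 // subr_eq0.
Qed.

Lemma sub_neq (a b : C) : a - b != 0 -> a != b.
Proof. by rewrite subr_eq0. Qed.

Definition lam s := phi (phi s / q) * (phi (q * s))^-1 / q.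

Lemma L2 s : s != 0 -> s != 1 -> s != x -> s != x * (1 - q) / (x - q) ->
  s != (1 - q * x) / (1 - q) -> s != x / q -> s != 1 / q ->
  PS (D (lam s)).
Proof.
move=> s0 s_1 sx sb1 sb2 sb3 sb4.
have xq1 : x - 1 != 0 by rewrite subr_eq0.
have q1' : 1 - q != 0 by rewrite subr_eq0 eq_sym.
have f1 : s - x != 0 by rewrite subr_eq0.
have f2 : q * s - x != 0 by apply: neq_lin.
have f3 : q * s - 1 != 0 by apply: neq_lin.
have f4 : (1 - q) * s - (1 - q * x) != 0 by apply: neq_lin.
have f5 : (x - q) * s - x * (1 - q) != 0.
  have [xq|xq] := eqVneq x q.
    by rewrite xq subrr mul0r sub0r oppr_eq0 mulf_neq0.
  by apply: neq_lin; rewrite // subr_eq0.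
have p0 : phi s != 0 by rewrite /phi !mulf_neq0 ?invr_eq0 ?subr_eq0.
set s1 := phi s / q; set s3 := phi (q * s).
have s10 : s1 != 0 by rewrite mulf_neq0 ?invr_eq0.
have s11 : s1 != 1.
  apply: sub_neq; rewrite (_ : s1 - 1 = ((x - q) * s - x * (1 - q)) / (q * (s - x))).
    by rewrite mulf_neq0 ?invr_eq0 ?mulf_neq0.
  by rewrite /s1 /phi; field; rewrite f1 q0.
have s1x : s1 != x.
  apply: sub_neq; rewrite (_ : s1 - x = x * ((1 - q) * s - (1 - q * x)) / (q * (s - x))).
    by rewrite !mulf_neq0 ?invr_eq0 ?mulf_neq0.
  by rewrite /s1 /phi; field; rewrite f1 q0.
have e30 : s3 = x * (q * s - 1) / (q * s - x) by [].
have e31 : s3 - 1 = q * s * (x - 1) / (q * s - x).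
  by rewrite e30; field; rewrite f2.
have e3x : s3 - x = x * (x - 1) / (q * s - x).
  by rewrite e30; field; rewrite f2.
have s30 : s3 != 0 by rewrite e30 !mulf_neq0 ?invr_eq0.
have s31 : s3 != 1 by apply: sub_neq; rewrite e31 !mulf_neq0 ?invr_eq0.
have s3x : s3 != x by apply: sub_neq; rewrite e3x !mulf_neq0 ?invr_eq0.
have ph3 : phi s3 = q / s^-1.
  by rewrite /phi e31 e3x; field; rewrite f2 xq1 x0 s0.
have i1 : s1^-1 = q / phi s by rewrite /s1; field; rewrite p0 q0.
have W := word (phi s1) (s3^-1) p0 (invr_neq0 s0).
rewrite -i1 -ph3 in W.
have k1 : 1 - k != 0.
  rewrite /k (_ : 1 - _ = - ((q - 1) ^+ 2 / q)); last by field.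
  by rewrite oppr_eq0 mulf_neq0 ?invr_eq0 // expf_neq0 // subr_eq0.
have k2 : k * q - 1 != 0.
  rewrite /k (_ : _ * q - 1 = q * (q - 1)); last by field.
  by rewrite mulf_neq0 // subr_eq0.
apply: (@P_scale_inv _ _ _ ((1 - k) * (k * q - 1))); first by rewrite mulf_neq0.
rewrite /lam -/s1 -/s3 -W.
apply: P_mul; first apply: P_mul.
- by apply: L1.
- by apply: L1.
- by apply: L1.
Qed.


Definition Nn s := ((x - q) * s + x * (q - 1)) * (q * s - x).
Definition Dd s := q * x * (q * s - 1) * ((1 - q) * s + (q * x - 1)).
Definition Bl := [:: 0; 1; x; x * (1 - q) / (x - q); (1 - q * x) / (1 - q); x / q; 1 / q].
Definition c0 := (x - q) / (q * x * (1 - q)).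
Definition Bad := 0 :: c0 :: [seq Nn b / Dd b | b <- Bl].

Lemma lam_rat s : s != x -> q * s - x != 0 -> q * s - 1 != 0 ->
  (1 - q) * s - (1 - q * x) != 0 -> lam s = Nn s / Dd s.
Proof.
move=> sx f2 f3 f4.
have f1 : s - x != 0 by rewrite subr_eq0.
have e1 : phi s / q - 1 = ((x - q) * s - x * (1 - q)) / (q * (s - x)).
  by rewrite /phi; field; rewrite f1 q0.
have e2 : phi s / q - x = x * ((1 - q) * s - (1 - q * x)) / (q * (s - x)).
  by rewrite /phi; field; rewrite f1 q0.
rewrite /lam {1}/phi e1 e2 /Nn /Dd /phi.
rewrite (_ : (1 - q) * s + (q * x - 1) = (1 - q) * s - (1 - q * x)); last by ring.
rewrite (_ : (x - q) * s + x * (q - 1) = (x - q) * s - x * (1 - q)); last by ring.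
by field; rewrite f1 f2 f3 f4 x0 q0.
Qed.

Lemma Dd0 r : Dd r = 0 -> Nn r != 0.
Proof.
have q1' : 1 - q != 0 by rewrite subr_eq0 eq_sym.
have xq1 : x - 1 != 0 by rewrite subr_eq0.
have ht1' : x * (q ^+ 2 - q + 1) - q != 0 by rewrite subr_eq0.
move=> hD.
have : (q * r - 1 == 0) || ((1 - q) * r + (q * x - 1) == 0).
  by move/eqP: hD; rewrite /Dd !mulf_eq0 (negbTE q0) (negbTE x0) /=.
case/orP => h.
  have -> : r = q^-1.
    by apply: (mulfI q0); rewrite mulfV //; apply/eqP; rewrite -subr_eq0.
  rewrite (_ : Nn q^-1 = (x * (q ^+ 2 - q + 1) - q) * (1 - x) / q).
    by rewrite !mulf_neq0 ?invr_eq0 // subr_eq0 eq_sym.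
  by rewrite /Nn; field.
have -> : r = (1 - q * x) / (1 - q).
  apply: (mulfI q1'); rewrite [RHS]mulrC divfK //; apply/eqP; rewrite -subr_eq0.
  by rewrite (_ : _ - _ = (1 - q) * r + (q * x - 1)) //; ring.
rewrite (_ : Nn _ = q * (x - 1) ^+ 2 * (x * (q ^+ 2 - q + 1) - q) / (1 - q) ^+ 2).
  by rewrite !mulf_neq0 ?invr_eq0 ?expf_neq0.
by rewrite /Nn; field.
Qed.

Lemma quadNn c s : Nn s - c * Dd s =
  ((x - q) * q - c * q ^+ 2 * x * (1 - q)) * s ^+ 2
  + (- (x - q) * x + x * (q - 1) * q - c * q * x * (q * (q * x - 1) - (1 - q))) * s
  + (- x ^+ 2 * (q - 1) + c * q * x * (q * x - 1)).
Proof. rewrite /Nn /Dd; ring. Qed.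

Lemma A_eq c : (x - q) * q - c * q ^+ 2 * x * (1 - q) = q * q * x * (1 - q) * (c0 - c).
Proof.
have q1' : 1 - q != 0 by rewrite subr_eq0 eq_sym.
by rewrite /c0; field; rewrite q0 x0 q1'.
Qed.

Lemma L3 c : c \notin Bad -> PS (D c).
Proof.
rewrite /Bad in_cons negb_or => /andP [cn0]; rewrite in_cons negb_or => /andP [cc0 cB].
set A := (x - q) * q - c * q ^+ 2 * x * (1 - q).
have q1' : 1 - q != 0 by rewrite subr_eq0 eq_sym.
have A0 : A != 0.
  rewrite /A A_eq.
  by rewrite !mulf_neq0 // subr_eq0 eq_sym.
set B1 := (- (x - q) * x + x * (q - 1) * q - c * q * x * (q * (q * x - 1) - (1 - q))).
set C0 := (- x ^+ 2 * (q - 1) + c * q * x * (q * x - 1)).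
have [r hr] := quad_root (B1 / A) (C0 / A).
have hN : Nn r = c * Dd r.
  apply/eqP; rewrite -subr_eq0 quadNn -/A -/B1 -/C0.
  rewrite (_ : _ + _ = A * (r ^+ 2 + B1 / A * r + C0 / A)); last by field.
  by rewrite hr mulr0.
have H : forall b, b \in Bl -> r != b.
  move=> b hb; apply/eqP => rb; move: hN; rewrite rb => hN.
  have [Db|Db] := eqVneq (Dd b) 0.
    by move: (Dd0 Db); rewrite hN Db mulr0 eqxx.
  move/negP: cB; apply; apply/mapP; exists b => //.
  by rewrite hN mulfK.
have r0 : r != 0 by apply: H; rewrite !inE eqxx ?orbT.
have r1 : r != 1 by apply: H; rewrite !inE eqxx ?orbT.
have rx : r != x by apply: H; rewrite !inE eqxx ?orbT.
have rb1 : r != (x * (1 - q) / (x - q)) by apply: H; rewrite !inE eqxx ?orbT.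
have rb2 : r != ((1 - q * x) / (1 - q)) by apply: H; rewrite !inE eqxx ?orbT.
have rb3 : r != (x / q) by apply: H; rewrite !inE eqxx ?orbT.
have rb4 : r != (1 / q) by apply: H; rewrite !inE eqxx ?orbT.
have f2 : q * r - x != 0 by apply: neq_lin.
have f3 : q * r - 1 != 0 by apply: neq_lin.
have f4 : (1 - q) * r - (1 - q * x) != 0 by apply: neq_lin.
have Dr : Dd r != 0.
  rewrite /Dd !mulf_neq0 //.
  by rewrite (_ : _ + _ = (1 - q) * r - (1 - q * x)) //; ring.
have -> : c = lam r by rewrite lam_rat // hN mulfK.
exact: L2.
Qed.

Lemma L4 c : c != 0 -> PS (D c).
Proof.
move=> cn0.
have [c1 hc1] := avoid (Bad ++ [seq c / b | b <- Bad]).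
move: hc1; rewrite mem_cat negb_or => /andP [h1 h2].
have c10 : c1 != 0 by apply: contraNneq h1 => ->; rewrite inE eqxx.
have -> : D c = D c1 *m D (c / c1).
  by rewrite /D mx2_mul; apply: mx2_congr; field.
apply: P_mul; first exact: L3.
apply: L3; apply/negP => hb; move/negP: h2; apply; apply/mapP.
exists (c / c1) => //; field; rewrite c10.
have : c / c1 != 0 by rewrite mulf_neq0 ?invr_eq0.
by rewrite cn0.
Qed.


Lemma k0 : k != 0.
Proof. by rewrite /k mulf_neq0 ?invr_eq0. Qed.

Lemma k1 : 1 - k != 0.
Proof.
rewrite /k (_ : 1 - _ = - ((q - 1) ^+ 2 / q)); last by field.
by rewrite oppr_eq0 mulf_neq0 ?invr_eq0 // expf_neq0 // subr_eq0.
Qed.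

Lemma Pdiag a b : a != 0 -> b != 0 -> PS (mx2 a 0 0 b).
Proof.
move=> a0 b0; apply: (@P_scale_inv _ _ _ b^-1); first by rewrite invr_neq0.
rewrite mx2_scale mulr0 (_ : b^-1 * a = a / b); last by rewrite mulrC.
by rewrite mulVf //; apply: L4; rewrite mulf_neq0 ?invr_eq0.
Qed.

Lemma PE : PS E.
Proof.
have [s hs] := avoid [:: 0; 1; x].
move: hs; rewrite !inE !negb_or => /and3P [s0 s1 sx].
have f1 : s - x != 0 by rewrite subr_eq0.
have p0 : phi s != 0 by rewrite /phi !mulf_neq0 ?invr_eq0 ?subr_eq0.
have -> : E = D (phi s)^-1 *m X (phi s) s^-1 *m D s.
  by rewrite XE /D /E !mx2_mul; apply: mx2_congr; field; rewrite ?p0 ?s0.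
apply: P_mul; first apply: P_mul.
- by apply: L4; rewrite invr_neq0.
- exact: L1.
- exact: L4.
Qed.

Definition G p := E *m D p *m E.

Lemma GE p : G p = mx2 (p - k) (k * (1 - p)) (p - 1) (1 - k * p).
Proof. by rewrite /G /D /E !mx2_mul; apply: mx2_congr; ring. Qed.

Lemma PG p : p != 0 -> PS (G p).
Proof.
move=> p0; apply: P_mul; first apply: P_mul.
- exact: PE.
- exact: L4.
- exact: PE.
Qed.

Lemma GG p : p != 0 -> G p *m G p^-1 = (1 - k) ^+ 2 *: 1%:M.
Proof.
move=> p0; rewrite !GE mx2_mul -mx2_1 mx2_scale; apply: mx2_congr; field;
  by rewrite p0.
Qed.

Lemma PN n11 n12 n21 n22 : n11 != 0 -> n12 != 0 -> n21 != 0 -> n22 != 0 ->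
  n11 * n22 - n12 * n21 != 0 -> PS (mx2 n11 n12 n21 n22).
Proof.
move=> h11 h12 h21 h22 hdet.
set rho := n11 * n22 / (n12 * n21).
have rho0 : rho != 0 by rewrite !mulf_neq0 ?invr_eq0 ?mulf_neq0.
have rho1 : rho - 1 != 0.
  rewrite (_ : rho - 1 = (n11 * n22 - n12 * n21) / (n12 * n21)).
    by rewrite !mulf_neq0 ?invr_eq0 ?mulf_neq0.
  by rewrite /rho; field; rewrite h12 h21.
have kk0 := k0; have kk1 := k1.
have [p hp] := quad_root ((1 + k ^+ 2 - 2 * rho * k) / (k * (rho - 1))) 1.
have F : (p - k) * (1 - k * p) = - (rho * k * (p - 1) ^+ 2).
  apply/eqP; rewrite -subr_eq0 opprK.
  rewrite (_ : _ + _ = k * (rho - 1) * (p ^+ 2 + (1 + k ^+ 2 - 2 * rho * k) / (k * (rho - 1)) * p + 1)).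
    by rewrite hp mulr0.
  by field; rewrite kk0 rho1.
have pk : p - k != 0.
  apply/eqP => pk; have e : p = k by apply/eqP; rewrite -subr_eq0 pk.
  move: F; rewrite e subrr mul0r => /eqP; rewrite eq_sym oppr_eq0; apply/negP.
  have kk1' : k - 1 != 0 by rewrite subr_eq0 eq_sym -subr_eq0.
  by rewrite !mulf_neq0 ?expf_neq0 ?invr_eq0 ?mulf_neq0.
have p1 : 1 - p != 0.
  apply/eqP => p1; have e : p = 1 by apply/eqP; rewrite eq_sym -subr_eq0 p1.
  move: F; rewrite e subrr expr0n /= mulr0 oppr0 mulr1 => /eqP.
  by rewrite mulf_eq0 (negbTE kk1).
set beta := n11 / (p - k).
set delta := n12 / (k * (1 - p)).
set gam := n21 * (p - k) / ((p - 1) * n11).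
have pm1 : p - 1 != 0 by rewrite -opprB oppr_eq0.
have -> : mx2 n11 n12 n21 n22 = mx2 1 0 0 gam *m G p *m mx2 beta 0 0 delta.
  rewrite GE !mx2_mul; apply: mx2_congr.
  - by rewrite /beta; field; rewrite pk.
  - by rewrite /delta; field; rewrite kk0 p1.
  - by rewrite /gam /beta; field; rewrite pk pm1 h11.
  rewrite !mul0r !mulr0 !add0r.
  rewrite (_ : gam * (1 - k * p) * delta = n21 * n12 * ((p - k) * (1 - k * p)) / ((p - 1) * n11 * (k * (1 - p)))).
    by rewrite F /rho; field; rewrite h12 h21 h11 pm1 kk0 p1.
  by rewrite /gam /delta; field; rewrite pm1 h11 kk0 p1.
have p0 : p != 0.
  apply/eqP => p0; move: hp; rewrite p0 expr0n /= mulr0 !add0r => /eqP.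
  by rewrite oner_eq0.
apply: P_mul; first apply: P_mul.
- apply: Pdiag; first exact: oner_neq0.
  by rewrite /gam !mulf_neq0 ?invr_eq0 ?mulf_neq0.
- exact: PG.
- apply: Pdiag.
    by rewrite /beta !mulf_neq0 ?invr_eq0.
  by rewrite /delta mulf_neq0 // invr_eq0 mulf_neq0.
Qed.


Lemma ent1 a b p : (a != 0) || (b != 0) -> p != (a * k + b) / (a + b) ->
  a * (p - k) + b * (p - 1) != 0.
Proof.
move=> hab hp; have [h|h] := eqVneq (a + b) 0.
  have eb : b = - a by apply/eqP; rewrite -addr_eq0 addrC h.
  have a0 : a != 0 by move: hab; rewrite eb oppr_eq0 orbb.
  rewrite eb (_ : _ + _ = a * (1 - k)); last by ring.
  by rewrite mulf_neq0 // k1.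
rewrite (_ : _ + _ = (a + b) * p - (a * k + b)); last by ring.
exact: neq_lin.
Qed.

Lemma ent2 a b p : (a != 0) || (b != 0) -> p != (a * k + b) / (k * (a + b)) ->
  a * (k * (1 - p)) + b * (1 - k * p) != 0.
Proof.
move=> hab hp; have [h|h] := eqVneq (a + b) 0.
  have eb : b = - a by apply/eqP; rewrite -addr_eq0 addrC h.
  have a0 : a != 0 by move: hab; rewrite eb oppr_eq0 orbb.
  rewrite eb (_ : _ + _ = - (a * (1 - k))); last by ring.
  by rewrite oppr_eq0 mulf_neq0 // k1.
rewrite (_ : _ + _ = - ((k * (a + b)) * p - (a * k + b))); last by ring.
by rewrite oppr_eq0; apply: neq_lin; rewrite // mulf_neq0 // k0.
Qed.

Lemma PM a b c d : a * d - b * c != 0 -> PS (mx2 a b c d).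
Proof.
move=> hdet.
have r1 : (a != 0) || (b != 0).
  apply: contraNT hdet; rewrite negb_or !negbK => /andP [/eqP -> /eqP ->].
  by rewrite !mul0r subrr.
have r2 : (c != 0) || (d != 0).
  apply: contraNT hdet; rewrite negb_or !negbK => /andP [/eqP -> /eqP ->].
  by rewrite !mulr0 subrr.
have [p hp] := avoid [:: 0; (a * k + b) / (a + b); (a * k + b) / (k * (a + b));
   (c * k + d) / (c + d); (c * k + d) / (k * (c + d))].
move: hp; rewrite !inE !negb_or => /and5P [p0 pa1 pa2 pc1 pc2].
have kk1 := k1.
have hN : PS (mx2 a b c d *m G p).
  rewrite GE mx2_mul; apply: PN.
  - exact: ent1.
  - exact: ent2.
  - exact: ent1.
  - exact: ent2.
  rewrite (_ : _ - _ = (a * d - b * c) * (p * (1 - k) ^+ 2)); last by ring.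
  by rewrite !mulf_neq0 // expf_neq0.
apply: (@P_scale_inv _ _ _ ((1 - k) ^+ 2)); first by rewrite expf_neq0.
have -> : (1 - k) ^+ 2 *: mx2 a b c d = mx2 a b c d *m G p *m G p^-1.
  by rewrite -mulmxA GG // -scalemxAr mulmx1.
apply: P_mul => //; apply: PG; rewrite invr_neq0 //.
Qed.

Lemma all_P A : A \in unitmx -> PS A.
Proof.
have -> : A = mx2 (A 0 0) (A 0 1) (A 1 0) (A 1 1).
  by apply/matrixP => i j; rewrite mxE; case: i => [[|[|//]] ?]; case: j => [[|[|//]] ?];
    congr (A _ _); apply: val_inj.
rewrite unitmxE unitfE mx2_det; exact: PM.
Qed.

End C.

Unset Implicit Arguments.
Theorem lemma3p10 (R : realType) (t x : R[i]) :
  x != t -> t != 0 -> t != 1 -> x != 0 -> x != 1 ->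
  PGL2_dense (gen_by (gens t x)).
Proof.
move=> xt t0 t1 x0 x1.
have [q hq] := quad_root (- (1 + t / x)) 1.
have q0 : q != 0.
  by apply/eqP => q0; move: hq; rewrite q0 expr0n /= mulr0 !add0r; apply/eqP; rewrite oner_eq0.
have ht : t = x * ((q ^+ 2 - q + 1) / q).
  apply: (mulIf q0); rewrite mulrA divfK // -[t](@divfK _ x) //.
  apply/eqP; rewrite -subr_eq0; apply/eqP.
  rewrite (_ : _ - _ = - (x * (q ^+ 2 + - (1 + t / x) * q + 1))); last by field.
  by rewrite hq mulr0 oppr0.
have q1 : q != 1.
  by apply: contraNneq xt => q1; rewrite ht q1; apply/eqP; field.
have hk0 : q ^+ 2 - q + 1 != 0.
  by apply: contraNneq t0 => h; rewrite ht h mul0r mulr0.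
have ht1 : x * (q ^+ 2 - q + 1) != q.
  by apply: contraNneq t1 => h; rewrite ht mulrA h divff.
move=> A hA eps heps.
have [c [w [c0 hw eA]]] := all_P x0 x1 q0 q1 hk0 ht1 ht hA.
exists c, w; split => // i j.
by rewrite eA mxE subrr normr0 ltcR.
Qed.

Print Assumptions lemma3p10.
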